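(* Consider the one-dimensional Approximate Hierarchical Heavy Hitters problem over a rooted tree $T$ all of whose leaves have depth $h$, so the lattice has $H=h+1$ nodes (depths $0,\dots,h$). Let $\phi\in(0,1]$ and let $\epsilon>0$ be such that $1/\epsilon$ is a positive integer. Run the one-dimensional algorithm described in the context (one Space Saving instance with $1/\epsilon$ counters per depth, followed by the one-dimensional output procedure with threshold $\phi$). Then the algorithm stores $H\cdot(1/\epsilon)$ counters, i.e. uses $O(H/\epsilon)$ space, and its output set $P$ together with the reported values $f_{\min}(p),f_{\max}(p)$ for $p\in P$ satisfies the Accuracy and Coverage requirements: (Accuracy) for all $p\in P$, $f_{\min}(p)\le f(p)\le f_{\max}(p)$ and $f_{\max}(p)-f_{\min}(p)\le\epsilon N$; (Coverage) for every prefix $p\notin P$, $F_p<\phi N$, where $F_p$ is the conditioned count of $p$ with respect to $P$.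
   Context: Hierarchy: a rooted tree $T$ in which every leaf has depth $h$; nodes are prefixes, leaves are fully specified elements. For prefixes $e,p$, $e\preceq p$ means $p$ is an ancestor of $e$ or equal to $e$; $e\prec p$ means $e\preceq p$, $e\ne p$. The lattice node (label) of a prefix is its depth. Each non-root prefix $p$ has a parent $\mathrm{par}(p)$. Stream: a sequence of updates $(e,c)$ with $e$ fully specified and $c$ a positive integer. $f(e)$ is the sum of the $c$'s of updates with element $e$; $N=\sum_e f(e)$. The unconditioned count of a prefix $p$ is $f(p)=\sum_{e \text{ fully specified},\,e\preceq p} f(e)$. For a set $P$ of prefixes and a prefix $p$, with $P_p=\{q\in P:q\prec p\}$, the conditioned count is $F_p=\sum f(e)$ over fully specified $e$ with $e\preceq p$ and $e\not\preceq q$ for all $q\in P_p$. Space Saving with $m$ counters: maintains a set $T'$ of at most $m$ items, each with a counter $c(i)$ and an error value $\mathrm{err}(i)$. On input $(i,c)$: if $i\in T'$, set $c(i)\mathrel{+}=c$; else if $|T'|<m$, add $i$ with $c(i)=c$, $\mathrm{err}(i)=0$; else remove an item $j$ with the smallest counter and add $i$ with $c(i)=c(j)+c$, $\mathrm{err}(i)=c(j)$. Estimates for item $i$: if $i\in T'$, $f_{\max}(i)=c(i)$ and $f_{\min}(i)=c(i)-\mathrm{err}(i)$; otherwise $f_{\min}(i)=0$ and $f_{\max}(i)$ equals the smallest counter if $|T'|=m$, and $0$ otherwise. Algorithm: keep one Space Saving instance with $1/\epsilon$ counters for each depth $0,\dots,h$. On update $(e,c)$, for every prefix $p$ with $e\preceq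 p$, feed $(p,c)$ to the instance for the depth of $p$. For a prefix $p$, $f_{\min}(p),f_{\max}(p)$ denote the estimates of the instance for $p$'s depth. Output procedure with threshold $\phi$: set $s_e=0$ for all prefixes; process all prefixes in postorder (each prefix after all its descendants); for prefix $e$: if $f_{\max}(e)-s_e\ge\phi N$, output $e$ (put it in $P$) together with $f_{\min}(e),f_{\max}(e)$, and (if $e$ is not the root) add $f_{\min}(e)$ to $s_{\mathrm{par}(e)}$; otherwise (if $e$ is not the root) add $s_e$ to $s_{\mathrm{par}(e)}$. *)

(* Defs.v *)
From HB Require Import structures.
From mathcomp Require Import all_boot all_order all_algebra.
Set Implicit Arguments. Unset Strict Implicit. Unset Printing Implicit Defensive.
Import Order.TTheory GRing.Theory Num.Theory.

Section Hierarchy.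
Variables (V : finType) (root : V) (par : V -> V).

(* e ⪯ p : p is e or an ancestor of e (at most #|V|-1 parent steps suffice in a tree) *)
Definition anc (e p : V) : bool := [exists k : 'I_#|V|, iter k par e == p].
Definition sanc (e p : V) : bool := anc e p && (e != p).

Definition depth (v : V) : nat := index root (traject par v #|V|).

Definition leaf (v : V) : bool := [forall c : V, ~~ ((c != root) && (par c == v))].

Definition hierarchy (h : nat) : Prop :=
  [/\ par root = root,
      (forall v : V, exists k, iter k par v = root) &
      (forall v : V, leaf v -> depth v = h)].

Definition fcount (s : seq (V * nat)) (e : V) : nat := \sum_(u <- s | u.1 == e) u.2.
Definition Ntot (s : seq (V * nat)) : nat := \sum_(u <- s) u.2.
Definition fpref (s : seq (V * nat)) (p : V) : nat :=
  \sum_(e : V | leaf e && anc e p) fcount s e.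
Definition Fcond (s : seq (V * nat)) (P : seq V) (p : V) : nat :=
  \sum_(e : V | [&& leaf e, anc e p & all (fun q => ~~ (sanc q p && anc e q)) P])
     fcount s e.

Definition ss_state := seq (V * nat * nat).
Definition itm (t : V * nat * nat) : V := t.1.1.
Definition cnt (t : V * nat * nat) : nat := t.1.2.
Definition err (t : V * nat * nat) : nat := t.2.

Inductive ss_step (m : nat) (st : ss_state) (i : V) (c : nat) : ss_state -> Prop :=
| SS_in : i \in map itm st ->
    ss_step m st i c
      (map (fun t => if itm t == i then (itm t, cnt t + c, err t) else t) st)
| SS_add : i \notin map itm st -> size st < m ->
    ss_step m st i c (rcons st (i, c, 0))
| SS_replace : forall j, i \notin map itm st -> ~~ (size st < m) ->
    j \in st -> (forall t, t \in st -> cnt j <= cnt t) ->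
    ss_step m st i c (rcons (rem j st) (i, cnt j + c, cnt j)).

(* all possible states after processing the stream (any tie-breaking) *)
Inductive ss_run (m : nat) : seq (V * nat) -> ss_state -> Prop :=
| SS_nil : ss_run m [::] [::]
| SS_cons : forall s st i c st', ss_run m s st -> ss_step m st i c st' ->
    ss_run m (rcons s (i, c)) st'.

Definition mincnt (st : ss_state) : nat :=
  match st with
  | [::] => 0
  | t :: st' => foldr (fun u a => minn (cnt u) a) (cnt t) st'
  end.

Definition lookup (st : ss_state) (i : V) : V * nat * nat :=
  nth (i, 0, 0) st (index i (map itm st)).

Definition ss_fmax (m : nat) (st : ss_state) (i : V) : nat :=
  if i \in map itm st then cnt (lookup st i)
  else if size st == m then mincnt st else 0.

Definition ss_fmin (st : ss_state) (i : V) : nat :=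
  if i \in map itm st then cnt (lookup st i) - err (lookup st i) else 0.

Definition feed (d : nat) (s : seq (V * nat)) : seq (V * nat) :=
  flatten [seq [seq (p, u.2) | p <- enum V & anc u.1 p && (depth p == d)] | u <- s].

Definition postorder (ord : seq V) : Prop :=
  perm_eq ord (enum V) /\
  (forall e p : V, sanc e p -> index e ord < index p ord).

Variable R : realFieldType.
Local Open Scope ring_scope.

Definition out_step (phi : R) (N : nat) (fmin fmax : V -> nat)
    (acc : (V -> nat) * seq V) (e : V) : (V -> nat) * seq V :=
  let (sv, P) := acc in
  if phi * N%:R <= (fmax e)%:R - (sv e)%:R then
    ((fun x => if (e != root) && (x == par e) then sv x + fmin e else sv x), e :: P)
  else
    ((fun x => if (e != root) && (x == par e) then sv x + sv e else sv x), P).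

Definition output (phi : R) (N : nat) (fmin fmax : V -> nat) (ord : seq V) : seq V :=
  (foldl (out_step phi N fmin fmax) ((fun _ => 0%N), [::]) ord).2.

End Hierarchy.

(* Main.v *)
Require Import Defs.
From HB Require Import structures.
From mathcomp Require Import all_boot all_order all_algebra.
From mathcomp Require Import lra zify.
From Stdlib Require Import Lia.
Import Order.TTheory GRing.Theory Num.Theory.
Set Implicit Arguments. Unset Strict Implicit. Unset Printing Implicit Defensive.

Definition treeH (V : finType) (root : V) (par : V -> V) :=
  par root = root /\ forall v, exists k, iter k par v = root.

Lemma depth_D1 (V : finType) (root : V) par : treeH root par -> forall v,
  iter (depth root par v) par v = root /\ (depth root par v < #|V|)%N.
Proof.
move=> [Hr Hreach] v.
have [k Hk] := Hreach v.
have Hc : fconnect par v root by rewrite -Hk; apply: fconnect_iter.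
have Hin : root \in traject par v #|V|.
  apply/trajectP; exists (findex par v root); last by rewrite iter_findex.
  apply: leq_trans (findex_max Hc) _; exact: max_card.
have Hlt : (depth root par v < #|V|)%N by rewrite /depth -[X in (_ < X)%N](size_traject par v) index_mem.
split=> //.
have := nth_index root Hin. rewrite -/(depth root par v) (set_nth_default v) ?size_traject // nth_traject //.
Qed.

Lemma depth_D2 (V : finType) (root : V) par v k :
  (k < depth root par v)%N -> iter k par v != root.
Proof.
move=> Hk.
have Hk' : (k < #|V|)%N.
  apply: leq_trans Hk _; rewrite /depth -[X in (_ <= X)%N](size_traject par v #|V|).
  exact: index_size.
have := before_find v Hk. rewrite nth_traject //= => ->. by [].
Qed.

Lemma depth_spec (V : finType) (root : V) par : treeH root par -> forall v d,
  iter d par v = root -> (forall k, (k < d)%N -> iter k par v != root) ->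
  depth root par v = d.
Proof.
move=> H v d H1 H2.
have [H3 _] := depth_D1 H v.
case: (ltngtP (depth root par v) d) => // Hlt.
- by move: (H2 _ Hlt); rewrite H3 eqxx.
- by move: (depth_D2 Hlt); rewrite H1 eqxx.
Qed.

Lemma iter_root (V : finType) (root : V) par : treeH root par -> forall n,
  iter n par root = root.
Proof. by move=> [Hr _]; elim=> //= n ->. Qed.

Lemma depth_iter (V : finType) (root : V) par : treeH root par -> forall v j,
  (j <= depth root par v)%N -> depth root par (iter j par v) = depth root par v - j.
Proof.
move=> H v j Hj; apply: (depth_spec H).
  by rewrite -iterD subnK //; case: (depth_D1 H v).
move=> k Hk; rewrite -iterD; apply: depth_D2; lia.
Qed.

Lemma iter_norm (V : finType) (root : V) par : treeH root par -> forall v i,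
  iter i par v = iter (minn i (depth root par v)) par v.
Proof.
move=> H v i; case: (leqP i (depth root par v)) => Hi //.
rewrite -(subnK (ltnW Hi)) iterD.
by case: (depth_D1 H v) => -> _; rewrite iter_root.
Qed.

Lemma ancP (V : finType) (root : V) par : treeH root par -> forall e p,
  reflect (exists i, iter i par e = p) (anc par e p).
Proof.
move=> H e p; apply: (iffP existsP).
  by case=> k /eqP Hk; exists k.
case=> i Hi; rewrite (iter_norm H) in Hi.
have Hlt : (minn i (depth root par e) < #|V|)%N.
  by apply: leq_ltn_trans (geq_minr _ _) _; case: (depth_D1 H e).
by exists (Ordinal Hlt); rewrite /= Hi.
Qed.

Lemma ancPn (V : finType) (root : V) par : treeH root par -> forall e p,
  anc par e p -> exists2 i, (i <= depth root par e)%N & iter i par e = p.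
Proof.
move=> H e p /(ancP H) [i Hi]; exists (minn i (depth root par e)); first exact: geq_minr.
by rewrite -(iter_norm H).
Qed.

Lemma anc_refl (V : finType) (root : V) par : treeH root par -> forall e, anc par e e.
Proof. by move=> H e; apply/(ancP H); exists 0%N. Qed.

Lemma anc_par (V : finType) (root : V) par : treeH root par -> forall e, anc par e (par e).
Proof. by move=> H e; apply/(ancP H); exists 1%N. Qed.

Lemma anc_trans (V : finType) (root : V) par : treeH root par -> forall a b c,
  anc par a b -> anc par b c -> anc par a c.
Proof.
move=> H a b c /(ancP H) [i <-] /(ancP H) [j <-]; apply/(ancP H); exists (j + i)%N.
by rewrite iterD.
Qed.

Lemma anc_total (V : finType) (root : V) par : treeH root par -> forall e a b,
  anc par e a -> anc par e b -> anc par a b || anc par b a.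
Proof.
move=> H e a b /(ancP H) [i <-] /(ancP H) [j <-].
case: (leqP i j) => Hij.
  by apply/orP; left; apply/(ancP H); exists (j - i)%N; rewrite -iterD subnK.
by apply/orP; right; apply/(ancP H); exists (i - j)%N; rewrite -iterD subnK // ltnW.
Qed.

Lemma anc_depth (V : finType) (root : V) par : treeH root par -> forall e p,
  anc par e p -> (depth root par p <= depth root par e)%N /\
  (depth root par p = depth root par e -> p = e).
Proof.
move=> H e p /(ancPn H) [i Hi <-]; rewrite (depth_iter H Hi); split; first exact: leq_subr.
move=> Heq; have -> : i = 0%N by lia.
by [].
Qed.

Lemma anc_same_depth (V : finType) (root : V) par : treeH root par -> forall e a b,
  anc par e a -> anc par e b -> depth root par a = depth root par b -> a = b.
Proof.
move=> H e a b Ha Hb Hd; case/orP: (anc_total H Ha Hb) => Hab.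
  by apply/esym; apply: (proj2 (anc_depth H Hab)); rewrite Hd.
by apply: (proj2 (anc_depth H Hab)); rewrite Hd.
Qed.

Lemma anc_antisym (V : finType) (root : V) par : treeH root par -> forall a b,
  anc par a b -> anc par b a -> a = b.
Proof.
move=> H a b Hab Hba; have [H1 H2] := anc_depth H Hab; have [H3 _] := anc_depth H Hba.
by apply/esym/H2; apply/eqP; rewrite eqn_leq H1 H3.
Qed.

Lemma depth_par (V : finType) (root : V) par : treeH root par -> forall c,
  c != root -> depth root par c = (depth root par (par c)).+1.
Proof.
move=> H c Hc.
have Hd : (0 < depth root par c)%N.
  rewrite lt0n; apply/eqP => H0; move: (proj1 (depth_D1 H c)); rewrite H0 /= => E.
  by rewrite E eqxx in Hc.
have := depth_iter H (j := 1) Hd; rewrite /= => ->; rewrite subn1 prednK //.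
Qed.

Lemma par_neq (V : finType) (root : V) par : treeH root par -> forall c,
  c != root -> par c != c.
Proof.
move=> H c Hc; apply/eqP => E; have := depth_par H Hc; rewrite E; lia.
Qed.
Lemma hier_tree (V : finType) (root : V) par h : hierarchy root par h -> treeH root par.
Proof. by case. Qed.

Lemma depth_le_h (V : finType) (root : V) par h : hierarchy root par h ->
  forall v, (depth root par v <= h)%N.
Proof.
move=> Hh v; have H := hier_tree Hh; case: Hh => _ _ Hleaf.
have Hv : anc par v v by apply: anc_refl H v.
case: (@arg_maxnP _ v (fun w => anc par w v) (fun w => depth root par w) Hv) => w Hwv Hmax.
have Hlw : leaf root par w.
  apply/forallP => c; apply/negP => /andP [Hc /eqP Hpc].
  have Hcv : anc par c v.
    apply: (anc_trans H (anc_par H c)). rewrite Hpc. exact: Hwv.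
  have := Hmax c Hcv; rewrite (depth_par H Hc) Hpc; lia.
rewrite -(Hleaf w Hlw); exact: (proj1 (anc_depth H Hwv)).
Qed.
Definition ss_inv (V : finType) (m : nat) (str : seq (V * nat)) (st : ss_state V) :=
 uniq (map (@itm V) st) /\ [/\ (size st <= m)%N,
  (forall t, t \in st -> fcount str (itm t) <= cnt t <= fcount str (itm t) + err t)%N,
  (forall t, t \in st -> err t * m <= Ntot str)%N,
  (forall j, j \notin map (@itm V) st ->
      (forall t, t \in st -> fcount str j <= cnt t)%N /\ ((size st < m)%N -> fcount str j = 0%N)) &
  (\sum_(t <- st) cnt t <= Ntot str)%N ].

Lemma fcount_rcons (V : finType) (s : seq (V * nat)) i c j :
  fcount (rcons s (i, c)) j = (fcount s j + (if i == j then c else 0))%N.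
Proof. by rewrite /fcount -cats1 big_cat /= big_cons big_nil /=; case: eqP => _; rewrite ?addn0. Qed.

Lemma Ntot_rcons (V : finType) (s : seq (V * nat)) i c :
  Ntot (rcons s (i, c)) = (Ntot s + c)%N.
Proof. by rewrite /Ntot -cats1 big_cat /= big_cons big_nil /= addn0. Qed.

Lemma sum_min_le (V : finType) (st : ss_state V) a :
  (forall t, t \in st -> a <= cnt t)%N -> (a * size st <= \sum_(t <- st) cnt t)%N.
Proof.
elim: st => [|t st IH] H; first by rewrite muln0.
rewrite big_cons /= mulnS leq_add //; first by apply: H; rewrite mem_head.
by apply: IH => u Hu; apply: H; rewrite in_cons Hu orbT.
Qed.

Lemma ss_inv_step (V : finType) m (s : seq (V * nat)) (st : ss_state V) (i : V) c (st' : ss_state V) :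
  (0 < m)%N -> ss_inv m s st -> ss_step m st i c st' -> ss_inv m (rcons s (i, c)) st'.
Proof.
move=> Hm [Hu [Hs Hpres Herr Habs Hsum]] Hstep.
case: Hstep.
-
  move=> Hi.
  set g := fun t : V * nat * nat => if itm t == i then (itm t, cnt t + c, err t) else t.
  have Hmap : map (@itm V) (map g st) = map (@itm V) st.
    by rewrite -map_comp; apply: eq_map => t /=; rewrite /g; case: ifP.
  split; last split.
  + by rewrite Hmap.
  + by rewrite size_map.
  + move=> t' /mapP [t Ht ->]; rewrite /g fcount_rcons; case: ifP => /eqP Ht1.
      rewrite /itm /cnt /err /= -/(itm t) Ht1 eqxx.
      by rewrite -Ht1 leq_add2r -addnAC leq_add2r; apply: Hpres.
    by rewrite (_ : (i == itm t) = false); [rewrite !addn0; apply: Hpres|apply/eqP => E; apply: Ht1].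
  + move=> t' /mapP [t Ht ->]; rewrite /g Ntot_rcons; case: ifP => _;
      by apply: leq_trans (Herr _ Ht) (leq_addr _ _).
  + move=> j; rewrite Hmap => Hj; have [H1 H2] := Habs j Hj.
    have Hij : (i == j) = false by apply/eqP => E; move: Hj; rewrite -E Hi.
    rewrite fcount_rcons Hij addn0 size_map; split=> // t' /mapP [t Ht ->].
    apply: leq_trans (H1 _ Ht) _; rewrite /g; case: ifP => //= _; exact: leq_addr.
  + rewrite big_map Ntot_rcons.
    have -> : \sum_(t <- st) cnt (g t) = (\sum_(t <- st) cnt t + \sum_(t <- st | itm t == i) c)%N.
      rewrite [X in (_ + X)%N]big_mkcond -big_split /=; apply: eq_bigr => t _; rewrite /g.
      by case: ifP => _; rewrite ?addn0.
    apply: leq_add => //.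
    rewrite -(big_map (@itm V) (fun x => x == i) (fun _ => c)) -big_filter.
    rewrite big_const_seq /= count_predT size_filter.
    have -> : count (fun x => x == i) (map (@itm V) st) = 1%N.
      by have := count_uniq_mem i Hu; rewrite Hi.
    by rewrite /= addn0.
-
  move=> Hi Hlt.
  have Hmap : map (@itm V) (rcons st (i, c, 0%N)) = rcons (map (@itm V) st) i by rewrite map_rcons.
  split; last split.
  + by rewrite Hmap rcons_uniq Hi.
  + by rewrite size_rcons.
  + move=> t; rewrite mem_rcons in_cons => /orP [/eqP ->|Ht].
      rewrite /itm /cnt /err /= fcount_rcons eqxx.
      by have [_ ->] := Habs i Hi; rewrite ?add0n ?addn0 ?leqnn.
    have Hij : (i == itm t) = false.
      by apply/eqP => E; move: Hi; rewrite E map_f.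
    by rewrite fcount_rcons Hij addn0; apply: Hpres.
  + move=> t; rewrite mem_rcons in_cons => /orP [/eqP ->|Ht]; first by rewrite /err.
    by rewrite Ntot_rcons; apply: leq_trans (Herr _ Ht) (leq_addr _ _).
  + move=> j; rewrite Hmap -cats1 mem_cat negb_or mem_seq1 => /andP [Hj Hji].
    have [_ H2] := Habs j Hj.
    rewrite fcount_rcons eq_sym (negbTE Hji) addn0 H2 //.
  + rewrite -cats1 big_cat /= big_cons big_nil Ntot_rcons /cnt /= addn0 leq_add2r //.
-
  move=> jt Hi Hnlt Hjt Hmin.
  have Hp := perm_to_rem Hjt.
  have Hpm := perm_map (@itm V) Hp.
  have Hum : uniq (itm jt :: map (@itm V) (rem jt st)) by rewrite -(perm_uniq Hpm).
  have Hirem : i \notin map (@itm V) (rem jt st).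
    by apply: contra Hi => H; rewrite (perm_mem Hpm) in_cons H orbT.
  have Hsz : size st = m.
    by apply/eqP; rewrite eqn_leq Hs leqNgt Hnlt.
  have Hszr : size (rem jt st) = m.-1.
    by rewrite size_rem // Hsz.
  set x := (i, cnt jt + c, cnt jt).
  have Hmap : map (@itm V) (rcons (rem jt st) x) = rcons (map (@itm V) (rem jt st)) i by rewrite map_rcons.
  have Hfi : (fcount s i <= cnt jt)%N by have [H1 _] := Habs i Hi; apply: H1.
  split; last split.
  + rewrite Hmap rcons_uniq Hirem /=; by case/andP: Hum.
  + by rewrite size_rcons Hszr prednK.
  + move=> t; rewrite mem_rcons in_cons => /orP [/eqP ->|Ht].
      rewrite /itm /cnt /err /= fcount_rcons eqxx.
      rewrite leq_add2r Hfi /=; lia.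
    have Ht' : t \in st := mem_rem Ht.
    have Hij : (i == itm t) = false.
      by apply/eqP => E; move: Hi; rewrite E map_f.
    by rewrite fcount_rcons Hij addn0; apply: Hpres.
  + move=> t; rewrite mem_rcons in_cons => /orP [/eqP ->|Ht].
      rewrite /err /= Ntot_rcons; apply: leq_trans (leq_addr _ _).
      rewrite -Hsz; apply: leq_trans (sum_min_le Hmin) Hsum.
    by rewrite Ntot_rcons; apply: leq_trans (Herr _ (mem_rem Ht)) (leq_addr _ _).
  + move=> j; rewrite Hmap -cats1 mem_cat negb_or mem_seq1 => /andP [Hj Hji].
    rewrite fcount_rcons eq_sym (negbTE Hji) addn0 size_rcons Hszr prednK // ltnn.
    split=> // t Ht.
    have Hjjt : (fcount s j <= cnt jt)%N.
      case: (boolP (j \in map (@itm V) st)) => Hjs.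
        move: Hjs; rewrite (perm_mem Hpm) in_cons (negbTE Hj) orbF => /eqP ->.
        by case/andP: (Hpres _ Hjt).
      by have [H1 _] := Habs j Hjs; apply: H1.
    apply: leq_trans Hjjt _.
    move: Ht; rewrite mem_rcons in_cons => /orP [/eqP ->|Ht]; first by rewrite /cnt /= leq_addr.
    by apply: Hmin; apply: mem_rem Ht.
  + rewrite (perm_big _ Hp) big_cons /= in Hsum.
    rewrite Ntot_rcons -cats1 big_cat /= big_cons big_nil /cnt /= addn0 -/(cnt jt).
    move: Hsum; rewrite /cnt /=; lia.
Qed.

Lemma ss_inv_run (V : finType) m (s : seq (V * nat)) (st : ss_state V) : (0 < m)%N -> ss_run m s st -> ss_inv m s st.
Proof.
move=> Hm; elim=> [|s0 st0 i c st' _ IH Hstep].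
  split=> //; split=> //; rewrite ?big_nil //.
  move=> j _; split; [by move=> t; rewrite in_nil | by rewrite /fcount big_nil].
exact: ss_inv_step Hm IH Hstep.
Qed.
Lemma lookup_spec (V : finType) (st : ss_state V) i :
  i \in map (@itm V) st -> lookup st i \in st /\ itm (lookup st i) = i.
Proof.
move=> Hi; have Hlt : (index i (map (@itm V) st) < size st)%N by rewrite -(size_map (@itm V)) index_mem.
split; first exact: mem_nth.
rewrite /lookup -(nth_map (i, 0%N, 0%N) i) //; exact: nth_index.
Qed.

Lemma mincnt_spec (V : finType) (st : ss_state V) :
  st != [::] -> (exists2 t, t \in st & mincnt st = cnt t) /\
  (forall t, t \in st -> mincnt st <= cnt t)%N.
Proof.
case: st => // t0 st _ /=.
elim: st => [|u st [IH1 IH2]] /=.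
  split; first by exists t0; rewrite ?mem_head.
  by move=> t; rewrite mem_seq1 => /eqP ->.
split.
  case: (leqP (cnt u) (foldr (fun u0 a => minn (cnt u0) a) (cnt t0) st)) => Hle.
    by exists u; rewrite // !in_cons eqxx orbT.
  case: IH1 => t Ht Heq; exists t => //.
  by move: Ht; rewrite !in_cons => /orP [->|->]; rewrite ?orbT.
move=> t; rewrite !in_cons => /orP [/eqP ->|/orP [/eqP ->|Ht]].
- have := IH2 t0 (mem_head _ _); lia.
- lia.
- have := IH2 t; rewrite in_cons Ht orbT => H; have := H isT; lia.
Qed.

Lemma ss_bounds (V : finType) m (str : seq (V * nat)) (st : ss_state V) i :
  (0 < m)%N -> ss_inv m str st ->
  (ss_fmin st i <= fcount str i <= ss_fmax m st i)%N /\
  ((ss_fmax m st i - ss_fmin st i) * m <= Ntot str)%N.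
Proof.
move=> Hm [Hu [Hs Hpres Herr Habs Hsum]].
rewrite /ss_fmin /ss_fmax; case: ifP => Hi.
  have [Ht Hti] := lookup_spec Hi.
  have := Hpres _ Ht; have := Herr _ Ht; rewrite Hti => He /andP [H1 H2].
  split; first by rewrite H1 andbT leq_subLR addnC.
  apply: leq_trans He; rewrite leq_mul2r; apply/orP; right; lia.
have [Ha1 Ha2] := Habs i (negbT Hi).
case: eqP => Hsz.
  have Hne : st != [::] by apply/eqP => E; move: Hsz Hm; rewrite E /= => <-.
  have [[t Ht Heq] Hmin] := mincnt_spec Hne.
  split; first by rewrite /= Heq Ha1.
  rewrite subn0 -Hsz; apply: leq_trans Hsum.
  by apply: sum_min_le => u Hu'; apply: Hmin.
rewrite Ha2 //; last by rewrite ltn_neqAle Hs andbT; apply/eqP.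
Qed.
Lemma sum_single (T : eqType) (r : seq T) (F : T -> nat) x :
  uniq r -> x \in r -> (forall y, y \in r -> y != x -> F y = 0%N) ->
  (\sum_(y <- r) F y)%N = F x.
Proof.
move=> Hu Hx H; rewrite (bigD1_seq x) //= big_seq_cond big1 ?addn0 // => y /andP [Hy Hyx].
exact: H.
Qed.

Lemma sum_enum_single (V : finType) (F : V -> nat) x :
  (forall y, y != x -> F y = 0%N) -> (\sum_(y <- enum V) F y)%N = F x.
Proof.
move=> H; apply: sum_single; rewrite ?enum_uniq ?mem_enum // => y _; exact: H.
Qed.

Lemma sum_cons (T : Type) (x : T) (s : seq T) (P : pred T) (F : T -> nat) :
  (\sum_(u <- x :: s | P u) F u = (if P x then F x else 0) + \sum_(u <- s | P u) F u)%N.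
Proof. by rewrite big_cons; case: ifP. Qed.

Lemma fcount_feed (V : finType) (root : V) par : treeH root par ->
  forall d (s : seq (V * nat)) p, depth root par p = d ->
  fcount (feed root par d s) p = (\sum_(u <- s | anc par u.1 p) u.2)%N.
Proof.
move=> H d s p Hd; elim: s => [|u s IH]; first by rewrite /fcount /feed /= !big_nil.
rewrite [RHS]big_mkcond big_cons /= -big_mkcond -IH /fcount /feed /= big_cat /=; congr (_ + _)%N.
rewrite big_map big_filter_cond /= big_mkcond /=.
rewrite (sum_enum_single (x := p)); first by rewrite Hd !eqxx !andbT.
by move=> y Hy; rewrite (negbTE Hy) andbF.
Qed.

Lemma fpref_eq (V : finType) (root : V) par (s : seq (V * nat)) p :
  all (fun u => leaf root par u.1) s ->
  fpref root par s p = (\sum_(u <- s | anc par u.1 p) u.2)%N.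
Proof.
elim: s => [|u s IH] Hall.
  by rewrite /fpref big_nil big1 // => e _; rewrite /fcount big_nil.
move: Hall => /= /andP [Hl Hall].
rewrite sum_cons -IH // /fpref /fcount.
under eq_bigr do rewrite sum_cons.
rewrite big_split /=; congr (_ + _)%N.
rewrite big_mkcond /= (bigD1 u.1) //= big1 ?addn0; first by rewrite eqxx Hl /=; case: ifP.
by move=> e He; rewrite eq_sym (negbTE He) if_same.
Qed.

Lemma Ntot_feed (V : finType) (root : V) par : treeH root par ->
  forall d (s : seq (V * nat)), (Ntot (feed root par d s) <= Ntot s)%N.
Proof.
move=> H d; elim=> [|u s IH]; first by rewrite /Ntot /feed /= !big_nil.
rewrite /Ntot /feed /= big_cat big_cons /= leq_add //.
rewrite big_map big_filter big_mkcond /=.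
case: (pickP (fun q => anc par u.1 q && (depth root par q == d))) => [q0 Hq0|Hn].
  rewrite (sum_enum_single (x := q0)); first by rewrite Hq0.
  move=> y Hy; case: ifP => // /andP [Hy1 /eqP Hy2]; case/andP: Hq0 => Hq1 /eqP Hq2.
  by move: Hy; rewrite (anc_same_depth H Hy1 Hq1) ?eqxx // Hy2 Hq2.
by rewrite big1 // => q _; rewrite Hn.
Qed.
Definition covind (V : finType) (root : V) (par : V -> V) (l P : seq V) (x e : V) : bool :=
  has (fun c => [&& c != root, par c == x, anc par e c &
                 has (fun q => anc par e q && anc par q c) P]) l.

Lemma covind_mono (V : finType) (root : V) par (l l' P P' : seq V) x e :
  {subset l <= l'} -> {subset P <= P'} -> covind root par l P x e -> covind root par l' P' x e.
Proof.
move=> Hl HP /hasP [c Hc /and4P [H1 H2 H3 /hasP [q Hq Hq']]].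
apply/hasP; exists c; first exact: Hl.
by rewrite H1 H2 H3 /=; apply/hasP; exists q => //; apply: HP.
Qed.

Lemma sum_sub (V : finType) (P Q : pred V) (F : V -> nat) :
  (forall i, P i -> Q i) -> (\sum_(i | P i) F i <= \sum_(i | Q i) F i)%N.
Proof.
move=> H; rewrite [X in (X <= _)%N]big_mkcond [X in (_ <= X)%N]big_mkcond /=.
apply: leq_sum => i _; case: (boolP (P i)) => Hp; first by rewrite (H _ Hp).
by case: ifP.
Qed.

Lemma cov_not_anc (V : finType) (root : V) par : treeH root par ->
  forall (l P : seq V) e0 e, e0 \notin l -> e0 != root ->
  covind root par l P (par e0) e -> anc par e e0 -> False.
Proof.
move=> H l P e0 e He0 Hr /hasP [c Hc /and4P [Hcr /eqP Hpc Hec _]] Hee0.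
have Hd : depth root par c = depth root par e0 by rewrite (depth_par H Hcr) (depth_par H Hr) Hpc.
by move: He0; rewrite -(anc_same_depth H Hec Hee0 Hd) Hc.
Qed.

Lemma cov_step (V : finType) (root : V) par (s : seq (V * nat)) : treeH root par ->
  forall (l P l' P' : seq V) e0 (sv : V -> nat) a (Q : pred V),
  e0 \notin l -> e0 != root -> {subset l <= l'} -> {subset P <= P'} ->
  (sv (par e0) <= \sum_(e | leaf root par e && covind root par l P (par e0) e) fcount s e)%N ->
  (a <= \sum_(e | leaf root par e && Q e) fcount s e)%N ->
  (forall e, leaf root par e -> Q e -> anc par e e0 /\ covind root par l' P' (par e0) e) ->
  (sv (par e0) + a <= \sum_(e | leaf root par e && covind root par l' P' (par e0) e) fcount s e)%N.
Proof.
move=> H l P l' P' e0 sv a Q He0 Hr Hl HP Hsv Ha HQ.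
rewrite (bigID (fun e => anc par e e0)) /= addnC; apply: leq_add.
  apply: leq_trans Ha _; apply: sum_sub => e /andP [Hle HQe].
  by have [Ha1 Ha2] := HQ e Hle HQe; rewrite Hle Ha1 Ha2.
apply: leq_trans Hsv _; apply: sum_sub => e /andP [Hle Hc].
rewrite Hle (covind_mono Hl HP Hc) /=.
by apply/negP => Hae; apply: (cov_not_anc H He0 Hr Hc Hae).
Qed.

Lemma out_inv (V : finType) (root : V) par (R : realFieldType) (s : seq (V * nat)) :
  treeH root par -> forall (phi : R) N (fmin fmax : V -> nat),
  (forall e, fmin e <= fpref root par s e)%N ->
  forall l : seq V, uniq l ->
  let acc := foldl (out_step root par phi N fmin fmax) ((fun _ => 0%N), [::]) l in
  {subset acc.2 <= l} /\
  forall x, (acc.1 x <= \sum_(e | leaf root par e && covind root par l acc.2 x e) fcount s e)%N.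
Proof.
move=> H phi N fmin fmax Hfmin l; elim/last_ind: l => [|l e0 IH].
  by move=> _ /=; split=> // x; rewrite big1.
rewrite rcons_uniq => /andP [He0 Hu] /=; rewrite foldl_rcons.
case E: (foldl _ _ l) IH => [sv P] IH; have [HPl IHs] := IH Hu; rewrite /= in HPl IHs.
have Hll : {subset l <= rcons l e0} by move=> y Hy; rewrite mem_rcons in_cons Hy orbT.
have He0l : e0 \in rcons l e0 by rewrite mem_rcons mem_head.
rewrite /out_step; case: ifP => Hout /=.
- split.
    by move=> y; rewrite in_cons => /orP [/eqP ->|/HPl]; [|apply: Hll].
  have HPP : {subset P <= e0 :: P} by move=> y Hy; rewrite in_cons Hy orbT.
  move=> x; case: (boolP ((e0 != root) && (x == par e0))) => [/andP [Hr /eqP ->]|_].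
    apply: (cov_step (Q := anc par ^~ e0) H He0 Hr Hll HPP (IHs _)).
      exact: Hfmin.
    move=> e Hle Hae; split=> //; apply/hasP; exists e0 => //.
    by rewrite Hr eqxx /= Hae (anc_refl H e0).
  apply: leq_trans (IHs x) _; apply: sum_sub => e /andP [-> Hc] /=.
  exact: (covind_mono Hll HPP Hc).
- split; first by move=> y /HPl; apply: Hll.
  have HPP : {subset P <= P} by [].
  move=> x; case: (boolP ((e0 != root) && (x == par e0))) => [/andP [Hr /eqP ->]|_].
    apply: (cov_step (Q := covind root par l P e0) H He0 Hr Hll HPP (IHs _)).
      exact: IHs.
    move=> e Hle /hasP [c Hc /and4P [Hcr /eqP Hpc Hec /hasP [q Hq /andP [Heq Hqc]]]].
    have Hce0 : anc par c e0 by rewrite -Hpc; apply: anc_par H c.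
    have Hae : anc par e e0 := anc_trans H Hec Hce0.
    split=> //; apply/hasP; exists e0 => //.
    rewrite Hr eqxx Hae /=; apply/hasP; exists q => //.
    by rewrite Heq (anc_trans H Hqc Hce0).
  apply: leq_trans (IHs x) _; apply: sum_sub => e /andP [-> Hc] /=.
  exact: (covind_mono Hll HPP Hc).
Qed.
Lemma foldl_P_mono (V : finType) (root : V) par (R : realFieldType) (phi : R) N fmin fmax :
  forall (l : seq V) acc, {subset acc.2 <= (foldl (out_step root par phi N fmin fmax) acc l).2}.
Proof.
elim=> [|x l IH] acc //= y Hy; apply: IH.
case: acc Hy => sv P /= Hy; rewrite /out_step; case: ifP => _ //=.
by rewrite in_cons Hy orbT.
Qed.

Lemma coverage (V : finType) (root : V) par (R : realFieldType) (s : seq (V * nat)) :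
  treeH root par -> forall (phi : R) N (fmin fmax : V -> nat),
  (forall e, fmin e <= fpref root par s e)%N ->
  (forall e, fpref root par s e <= fmax e)%N ->
  forall ord : seq V, uniq ord -> forall p, p \in ord ->
  p \notin output root par phi N fmin fmax ord ->
  ((Fcond root par s (output root par phi N fmin fmax ord) p)%:R < phi * N%:R)%R.
Proof.
move=> H phi N fmin fmax Hfmin Hfmax ord Hu p Hp.
case/splitPr: Hp Hu => l1 l2 Hu.
have Hu1 : uniq l1 by move: Hu; rewrite cat_uniq => /and3P [].
have Hpl1 : p \notin l1 by move: Hu; rewrite cat_uniq /= => /and3P [_ /norP [Hp0 _] _].
have [_ Hinv] := out_inv H phi N fmax Hfmin Hu1.
rewrite /output foldl_cat /=.
move: Hinv; case E: (foldl _ _ l1) => [sv P1] /= Hinv.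
set Pf := (foldl _ _ l2).2.
have Hmono := @foldl_P_mono V root par R phi N fmin fmax l2 (out_step root par phi N fmin fmax (sv, P1) p).
rewrite -/Pf in Hmono.
have HP1 : {subset P1 <= Pf}.
  move=> q Hq; apply: Hmono; rewrite /out_step; case: ifP => _ //=.
  by rewrite in_cons Hq orbT.
move=> HpPf.
have Hnout : ~~ (phi * N%:R <= (fmax p)%:R - (sv p)%:R)%R.
  apply/negP => Hout; move: HpPf; rewrite (Hmono p) //.
  by rewrite /out_step Hout mem_head.
have Hnat : (Fcond root par s Pf p + sv p <= fmax p)%N.
  apply: leq_trans (Hfmax p); apply: leq_trans (leq_add (leqnn _) (Hinv p)) _.
  rewrite /fpref [X in (_ <= X)%N](bigID (fun e => all (fun q => ~~ (sanc par q p && anc par e q)) Pf)) /=.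
  apply: leq_add.
    by rewrite /Fcond; apply: sum_sub => e /and3P [-> -> ->].
  apply: sum_sub => e /andP [Hle /hasP [c Hc /and4P [Hcr /eqP Hpc Hec /hasP [q Hq /andP [Heq Hqc]]]]].
  have Hcp : anc par c p by rewrite -Hpc; apply: anc_par H c.
  have Hep : anc par e p := anc_trans H Hec Hcp.
  rewrite Hle Hep /=; apply/negP => /allP Hall.
  have := Hall q (HP1 _ Hq); rewrite Heq andbT /sanc (anc_trans H Hqc Hcp) /=.
  apply/negP; rewrite negbK; apply/eqP => Eqp.
  have Ecp : c = p by apply: (anc_antisym H Hcp); rewrite -Eqp.
  by move: (par_neq H Hcr); rewrite Hpc Ecp eqxx.
rewrite -ltNge in Hnout.
apply: le_lt_trans Hnout.
have : ((Fcond root par s Pf p + sv p)%:R <= (fmax p)%:R :> R)%R by rewrite ler_nat.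
rewrite natrD; lra.
Qed.
Unset Implicit Arguments.
Local Open Scope ring_scope.

Theorem theorem1 (R : realFieldType) (V : finType) (root : V) (par : V -> V)
    (h : nat) (phi : R) (k : nat) (s : seq (V * nat))
    (sts : nat -> seq (V * nat * nat)) (ord : seq V) :
  hierarchy root par h ->
  0 < phi <= 1 ->
  (0 < k)%N ->
  all (fun u => leaf root par u.1 && (0 < u.2)%N) s ->
  (forall d, (d <= h)%N -> ss_run k (feed root par d s) (sts d)) ->
  postorder par ord ->
  let eps : R := k%:R^-1 in
  let N := Ntot s in
  let fmin p := ss_fmin (sts (depth root par p)) p in
  let fmax p := ss_fmax k (sts (depth root par p)) p in
  let P := output root par phi N fmin fmax ord in
  (\sum_(d < h.+1) size (sts d) <= h.+1 * k)%N /\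
  (forall p, p \in P ->
     [/\ (fmin p <= fpref root par s p)%N, (fpref root par s p <= fmax p)%N
       & (fmax p)%:R - (fmin p)%:R <= eps * N%:R :> R]) /\
  (forall p, p \notin P -> (Fcond root par s P p)%:R < phi * N%:R).
Proof.
move=> Hh Hphi Hk Hall Hruns [Hperm _] eps N fmin fmax P.
have H := hier_tree Hh.
have Hall1 : all (fun u => leaf root par u.1) s.
  by apply: sub_all Hall => u /andP [].
have Hb : forall p, [/\ (fmin p <= fpref root par s p)%N, (fpref root par s p <= fmax p)%N
    & ((fmax p - fmin p) * k <= N)%N].
  move=> p; have Hd := depth_le_h Hh p.
  have Hinv := ss_inv_run Hk (Hruns _ Hd).
  have [/andP [H1 H2] H3] := ss_bounds p Hk Hinv.
  rewrite (fcount_feed H s (erefl _)) -(@fpref_eq V root par s p Hall1) in H1 H2.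
  split=> //; apply: leq_trans H3 _; exact: Ntot_feed.
split.
  apply: (@leq_trans (\sum_(d < h.+1) k)%N).
    apply: leq_sum => d _.
    have [_ [Hs _ _ _ _]] := ss_inv_run Hk (Hruns d (ltn_ord d)).
    exact: Hs.
  by rewrite sum_nat_const card_ord.
split.
  move=> p _; have [H1 H2 H3] := Hb p; split=> //.
  have Hle : (fmin p <= fmax p)%N := leq_trans H1 H2.
  rewrite -natrB // /eps ler_pdivlMl ?ltr0n // -natrM ler_nat mulnC //.
move=> p Hp.
have Hu : uniq ord by rewrite (perm_uniq Hperm) enum_uniq.
have Hpo : p \in ord by rewrite (perm_mem Hperm) mem_enum.
apply: (coverage H _ _ Hu Hpo Hp) => e; by case: (Hb e).
Qed.
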